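(* Let $T$ be a first-order $\mathscr L$-theory. A model $A$ of $T$ is geometrically closed in $\mathrm{Mod}(T)$ if and only if it is geometrically closed in $\mathrm{Mod}(T_W)$.
   Context: A quasi-algebraic formula has the form $\forall\bar y\,(\bigwedge\Phi(\bar x,\bar y)\to\psi(\bar x,\bar y))$ with $\Phi\cup\{\psi\}$ a finite set of atomic formulas; $T_W$ is the set of quasi-algebraic sentences implied by $T$. A homomorphism of $\mathscr L$-structures preserves atomic sentences with parameters. A homomorphism $f:A\to B$ is geometrically closed if for every quasi-algebraic sentence $\phi(\bar a)$ with parameters in $A$ with $A\models\phi(\bar a)$, one has $B\models\phi(f\bar a)$. $A$ is geometrically closed in a class $\mathcal C$ containing $A$ if every homomorphism from $A$ to a member of $\mathcal C$ is geometrically closed. *)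

(* Defs.v *)
From mathcomp Require Import all_boot.
From Stdlib Require List.
Set Implicit Arguments.
Unset Strict Implicit.
Unset Printing Implicit Defensive.

Record language := Language {
  func : Type;
  rel : Type;
  farity : func -> nat;
  rarity : rel -> nat }.

Section Syntax.
Variable L : language.

Inductive term : Type :=
  | tvar : nat -> term
  | tapp : forall f : func L, ('I_(farity f) -> term) -> term.

Inductive atomic : Type :=
  | aeq : term -> term -> atomic
  | arel : forall r : rel L, ('I_(rarity r) -> term) -> atomic.

(* first-order formulas with equality, de Bruijn-indexed quantifiers *)
Inductive formula : Type :=
  | fatom : atomic -> formula
  | fbot : formula
  | fneg : formula -> formula
  | fand : formula -> formula -> formula
  | forr : formula -> formula -> formula
  | fimp : formula -> formula -> formula
  | fall : formula -> formula
  | fex : formula -> formula.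

Fixpoint term_bounded (k : nat) (t : term) : Prop :=
  match t with
  | tvar i => i < k
  | tapp f ts => forall i, term_bounded k (ts i)
  end.

Definition atomic_bounded (k : nat) (a : atomic) : Prop :=
  match a with
  | aeq t1 t2 => term_bounded k t1 /\ term_bounded k t2
  | arel r ts => forall i, term_bounded k (ts i)
  end.

Fixpoint formula_bounded (k : nat) (p : formula) : Prop :=
  match p with
  | fatom a => atomic_bounded k a
  | fbot => True
  | fneg q => formula_bounded k q
  | fand q r | forr q r | fimp q r => formula_bounded k q /\ formula_bounded k r
  | fall q | fex q => formula_bounded k.+1 q
  end.

Definition sentence (p : formula) : Prop := formula_bounded 0 p.

(* A quasi-algebraic formula  forall y_0 .. y_{k-1} (/\ Phi -> psi):
   the variables 0 .. k-1 are the universally bound ones (the tuple y),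
   the variables >= k are the free ones (the tuple x). *)
Record qa_formula : Type := QA {
  qa_nbound : nat;
  qa_hyps : seq atomic;
  qa_concl : atomic }.

Definition qa_sentence (q : qa_formula) : Prop :=
  (forall a, List.In a (qa_hyps q) -> atomic_bounded (qa_nbound q) a) /\
  atomic_bounded (qa_nbound q) (qa_concl q).

End Syntax.

Arguments tvar {L}.

Record structure (L : language) := Structure {
  carrier :> Type;
  interp_f : forall f : func L, ('I_(farity f) -> carrier) -> carrier;
  interp_r : forall r : rel L, ('I_(rarity r) -> carrier) -> Prop }.

Section Semantics.
Variables (L : language) (M : structure L).

Fixpoint eval (e : nat -> M) (t : term L) : M :=
  match t with
  | tvar i => e i
  | tapp f ts => interp_f (fun i => eval e (ts i))
  end.

Definition sat_atomic (e : nat -> M) (a : atomic L) : Prop :=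
  match a with
  | aeq t1 t2 => eval e t1 = eval e t2
  | arel r ts => interp_r (fun i => eval e (ts i))
  end.

Definition scons (m : M) (e : nat -> M) : nat -> M :=
  fun i => match i with 0 => m | j.+1 => e j end.

Fixpoint sat (e : nat -> M) (p : formula L) : Prop :=
  match p with
  | fatom a => sat_atomic e a
  | fbot => False
  | fneg q => ~ sat e q
  | fand q r => sat e q /\ sat e r
  | forr q r => sat e q \/ sat e r
  | fimp q r => sat e q -> sat e r
  | fall q => forall m : M, sat (scons m e) q
  | fex q => exists m : M, sat (scons m e) q
  end.

Definition sat_qa (e : nat -> M) (q : qa_formula L) : Prop :=
  forall e' : nat -> M,
    (forall i, qa_nbound q <= i -> e' i = e i) ->
    (forall a, List.In a (qa_hyps q) -> sat_atomic e' a) ->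
    sat_atomic e' (qa_concl q).

End Semantics.

Definition theory (L : language) := formula L -> Prop.

Definition is_theory (L : language) (T : theory L) : Prop :=
  forall p, T p -> sentence p.

Definition model_of (L : language) (T : theory L) (M : structure L) : Prop :=
  forall p, T p -> forall e : nat -> M, sat e p.

Definition TW (L : language) (T : theory L) (q : qa_formula L) : Prop :=
  qa_sentence q /\ forall M : structure L, model_of T M -> forall e : nat -> M, sat_qa e q.

Definition model_of_qa (L : language) (S : qa_formula L -> Prop) (M : structure L) : Prop :=
  forall q, S q -> forall e : nat -> M, sat_qa e q.

Definition homomorphism (L : language) (A B : structure L) (f : A -> B) : Prop :=
  forall (a : atomic L) (e : nat -> A), sat_atomic e a -> sat_atomic (f \o e) a.

Definition geometrically_closed_hom (L : language) (A B : structure L) (f : A -> B) : Prop :=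
  forall (q : qa_formula L) (e : nat -> A), sat_qa e q -> sat_qa (f \o e) q.

(* A is geometrically closed in the class C (A is assumed to belong to C) *)
Definition geometrically_closed_in (L : language) (C : structure L -> Prop)
    (A : structure L) : Prop :=
  forall (B : structure L) (f : A -> B), C B -> homomorphism f -> geometrically_closed_hom f.

(* Main.v *)
Require Import Defs.
From mathcomp Require Import all_boot.
From mathcomp Require Import boolp classical_sets filter.
From Stdlib Require Import Classical ClassicalEpsilon FunctionalExtensionality ProofIrrelevance PropExtensionality.
From Stdlib Require List.
Set Implicit Arguments.
Unset Strict Implicit.
Unset Printing Implicit Defensive.

Section Syn.
Variable L : language.

Fixpoint rent (s : nat -> nat) (t : term L) : term L :=
  match t with
  | tvar i => tvar (s i)
  | @tapp _ f ts => @tapp L f (fun i => rent s (ts i))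
  end.

Definition rena (s : nat -> nat) (a : atomic L) : atomic L :=
  match a with
  | aeq t1 t2 => aeq (rent s t1) (rent s t2)
  | @arel _ r ts => @arel L r (fun i => rent s (ts i))
  end.

Lemma eval_rent (M : structure L) (e : nat -> M) s t :
  eval e (rent s t) = eval (e \o s) t.
Proof.
elim: t => [i|f ts IH] //=.
by congr interp_f; apply: functional_extensionality => i; apply: IH.
Qed.

Lemma sat_rena (M : structure L) (e : nat -> M) s a :
  sat_atomic e (rena s a) = sat_atomic (e \o s) a.
Proof.
case: a => [t1 t2|r ts] /=; first by rewrite !eval_rent.
by congr interp_r; apply: functional_extensionality => i; rewrite eval_rent.
Qed.

Lemma term_bounded_mono k k' (t : term L) : k <= k' -> term_bounded k t -> term_bounded k' t.
Proof.
move=> kk'; elim: t => [i|f ts IH] /=; first by move=> h; apply: leq_trans kk'.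
by move=> h i; apply: IH.
Qed.

Lemma atomic_bounded_mono k k' (a : atomic L) : k <= k' -> atomic_bounded k a -> atomic_bounded k' a.
Proof.
move=> kk'; case: a => [t1 t2|r ts] /=.
  by case=> h1 h2; split; apply: term_bounded_mono kk' _.
by move=> h i; apply: term_bounded_mono kk' _.
Qed.

Lemma fin_bound n (P : 'I_n -> nat -> Prop) :
  (forall i k k', k <= k' -> P i k -> P i k') ->
  (forall i, exists k, P i k) -> exists k, forall i, P i k.
Proof.
move=> mono ex.
pose K i := proj1_sig (constructive_indefinite_description _ (ex i)).
exists (\max_(i < n) K i) => i.
apply: (mono i (K i)); first exact: (leq_bigmax i).
exact: (proj2_sig (constructive_indefinite_description _ (ex i))).
Qed.

Lemma term_bound_ex (t : term L) : exists k, term_bounded k t.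
Proof.
elim: t => [i|f ts IH] /=; first by exists i.+1.
apply: fin_bound => // i k k' kk'; exact: term_bounded_mono.
Qed.

Lemma atomic_bound_ex (a : atomic L) : exists k, atomic_bounded k a.
Proof.
case: a => [t1 t2|r ts] /=.
  have [k1 h1] := term_bound_ex t1; have [k2 h2] := term_bound_ex t2.
  exists (maxn k1 k2); split.
    by apply: term_bounded_mono h1; rewrite leq_maxl.
  by apply: term_bounded_mono h2; rewrite leq_maxr.
apply: fin_bound; last by move=> i; apply: term_bound_ex.
move=> i k k' kk'; exact: term_bounded_mono.
Qed.

Lemma list_bound_ex (l : seq (atomic L)) :
  exists k, forall a, List.In a l -> atomic_bounded k a.
Proof.
elim: l => [|a l [k IH]]; first by exists 0.
have [k1 h1] := atomic_bound_ex a.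
exists (maxn k1 k) => b /= [<-|inb].
  by apply: atomic_bounded_mono h1; rewrite leq_maxl.
by apply: atomic_bounded_mono (IH _ inb); rewrite leq_maxr.
Qed.

Lemma eval_ext (M : structure L) k (e1 e2 : nat -> M) t :
  term_bounded k t -> (forall i, i < k -> e1 i = e2 i) -> eval e1 t = eval e2 t.
Proof.
move=> + he; elim: t => [i|f ts IH] /=; first by apply: he.
move=> h; congr interp_f; apply: functional_extensionality => i; exact: IH.
Qed.

Lemma sat_atomic_ext (M : structure L) k (e1 e2 : nat -> M) a :
  atomic_bounded k a -> (forall i, i < k -> e1 i = e2 i) ->
  sat_atomic e1 a = sat_atomic e2 a.
Proof.
move=> + he; case: a => [t1 t2|r ts] /=.
  by case=> h1 h2; rewrite (eval_ext h1 he) (eval_ext h2 he).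
move=> h; congr interp_r; apply: functional_extensionality => i.
exact: eval_ext (h i) he.
Qed.

End Syn.

Section Ultra.
Variables (L : language) (I : Type) (M : I -> structure L).
Variable U : (I -> Prop) -> Prop.
Hypothesis UT : U (fun _ => True).
Hypothesis UI : forall X Y, U X -> U Y -> U (fun i => X i /\ Y i).
Hypothesis US : forall X Y : I -> Prop, (forall i, X i -> Y i) -> U X -> U Y.
Hypothesis U0 : ~ U (fun _ => False).
Hypothesis Uu : forall X, U X \/ U (fun i => ~ X i).
Variable m0 : forall i, M i.

Definition prodM := forall i, M i.
Definition eqv (x y : prodM) : Prop := U (fun i => x i = y i).

Lemma eqv_refl x : eqv x x.
Proof. by apply: US UT. Qed.
Lemma eqv_sym x y : eqv x y -> eqv y x.
Proof. by apply: US. Qed.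
Lemma eqv_trans x y z : eqv x y -> eqv y z -> eqv x z.
Proof. move=> h1 h2; apply: US (UI h1 h2) => i [-> ->] //. Qed.

Definition ucar := {Q : prodM -> Prop | exists y, Q = eqv y}.
Definition cls (x : prodM) : ucar := exist _ (eqv x) (ex_intro _ x erefl).
Definition rep (z : ucar) : prodM :=
  proj1_sig (constructive_indefinite_description _ (proj2_sig z)).

Lemma cls_eq x y : cls x = cls y <-> eqv x y.
Proof.
split.
  move=> h; have : eqv x = eqv y by move: (f_equal (@proj1_sig _ _) h).
  by move=> ->; apply: eqv_refl.
move=> h; apply: eq_sig_hprop; first by move=> ? ? ?; apply: proof_irrelevance.
rewrite /=; apply: functional_extensionality => z; apply: propositional_extensionality.
split=> hz; [apply: eqv_trans hz; exact: eqv_sym | exact: eqv_trans hz].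
Qed.

Lemma cls_rep z : cls (rep z) = z.
Proof.
apply: eq_sig_hprop; first by move=> ? ? ?; apply: proof_irrelevance.
rewrite /rep /=; case: (constructive_indefinite_description _ _) => y /= -> //.
Qed.

Lemma rep_cls x : eqv (rep (cls x)) x.
Proof. by apply/cls_eq; rewrite cls_rep. Qed.

Definition uf (f : func L) (args : 'I_(farity f) -> ucar) : ucar :=
  cls (fun i => @interp_f L (M i) f (fun j => rep (args j) i)).
Definition ur (r : Defs.rel L) (args : 'I_(rarity r) -> ucar) : Prop :=
  U (fun i => @interp_r L (M i) r (fun j => rep (args j) i)).
Definition Ult : structure L := @Structure L ucar uf ur.

Lemma U_seq n (S : 'I_n -> I -> Prop) (s : seq 'I_n) :
  (forall j, U (S j)) -> U (fun i => forall j, j \in s -> S j i).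
Proof.
move=> h; elim: s => [|a s IH]; first by apply: US UT.
apply: US (UI (h a) IH) => i [h1 h2] j; rewrite inE => /orP [/eqP ->|] //.
exact: h2.
Qed.

Lemma U_fin n (S : 'I_n -> I -> Prop) :
  (forall j, U (S j)) -> U (fun i => forall j, S j i).
Proof.
move=> h; apply: US (U_seq (enum 'I_n) h) => i hi j; apply: hi.
by rewrite mem_enum.
Qed.

Lemma U_rep n (y : 'I_n -> prodM) :
  U (fun i => (fun j => rep (cls (y j)) i) = (fun j => y j i)).
Proof.
apply: US (U_fin (fun j => rep_cls (y j))) => i h.
by apply: functional_extensionality.
Qed.

Lemma eval_ult (e : nat -> prodM) t :
  @eval L Ult (fun k => cls (e k)) t = cls (fun i => eval (fun k => e k i) t).
Proof.
elim: t => [k|f ts IH] //=.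
have -> : (fun j => @eval L Ult (fun k => cls (e k)) (ts j)) =
          (fun j => cls (fun i => eval (fun k => e k i) (ts j))).
  by apply: functional_extensionality => j; apply: IH.
apply/cls_eq; rewrite /eqv.
apply: US (U_rep (fun j i => eval (fun k => e k i) (ts j))) => i /= -> //.
Qed.

Lemma Uneg X : U (fun i => ~ X i) <-> ~ U X.
Proof.
split; first by move=> h1 h2; apply: U0; apply: US (UI h1 h2) => i [].
by move=> h; case: (Uu X).
Qed.

Definition scons_p (x : prodM) (e : nat -> prodM) : nat -> prodM :=
  fun k => match k with 0 => x | j.+1 => e j end.

Lemma scons_cls x (e : nat -> prodM) :
  scons (cls x : Ult) (fun k => cls (e k) : Ult) = (fun k => cls (scons_p x e k)).
Proof. by apply: functional_extensionality => -[|k]. Qed.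

Lemma scons_p_at x (e : nat -> prodM) i :
  (fun k => scons_p x e k i) = scons (x i) (fun k => e k i).
Proof. by apply: functional_extensionality => -[|k]. Qed.

Lemma los (p : formula L) (e : nat -> prodM) :
  @sat L Ult (fun k => cls (e k)) p <-> U (fun i => sat (fun k => e k i) p).
Proof.
elim: p e => [a||q IHq|q IHq r IHr|q IHq r IHr|q IHq r IHr|q IH|q IH] e /=.
- case: a => [t1 t2|r ts] /=.
    by rewrite !eval_ult cls_eq.
  rewrite /ur.
  have -> : (fun i => @interp_r L (M i) r (fun j => rep (@eval L Ult (fun k => cls (e k)) (ts j)) i)) =
     (fun i => @interp_r L (M i) r (fun j => rep (cls (fun i' => eval (fun k => e k i') (ts j))) i)).
    apply: functional_extensionality => i; congr interp_r.
    by apply: functional_extensionality => j; rewrite eval_ult.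
  have h := U_rep (fun j i => eval (fun k => e k i) (ts j)).
  split=> h2; apply: US (UI h h2) => i /= [-> //].
- by split=> // h; apply: U0.
- rewrite IHq; split; [exact: (proj2 (Uneg _)) | exact: (proj1 (Uneg _))].
- rewrite IHq IHr; split.
    by case=> h1 h2; apply: US (UI h1 h2).
  by move=> h; split; apply: US h => i [].
- rewrite IHq IHr; split.
    by case=> h; apply: US h => i h'; [left|right].
  move=> h; apply: NNPP => hn.
  have h1 : U (fun i => ~ sat (fun k => e k i) q) by apply/Uneg => h1; apply: hn; left.
  have h2 : U (fun i => ~ sat (fun k => e k i) r) by apply/Uneg => h2; apply: hn; right.
  by apply: U0; apply: US (UI h (UI h1 h2)) => i [[]] ? [].
- rewrite IHq IHr; split.
    move=> h; case: (Uu (fun i => sat (fun k => e k i) q)) => hq.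
      by apply: US (h hq) => i ? ?.
    by apply: US hq => i ? ?.
  by move=> h hq; apply: US (UI h hq) => i [] /[apply].
- split.
    move=> h; apply: NNPP => hn.
    have hn' : U (fun i => exists y, ~ sat (scons y (fun k => e k i)) q).
      apply: US (proj2 (Uneg _) hn) => i hi; apply: NNPP => hi'; apply: hi => y.
      by apply: NNPP => hy; apply: hi'; exists y.
    pose x i := match excluded_middle_informative
                  (exists y, ~ sat (scons y (fun k => e k i)) q) with
                | left h => proj1_sig (constructive_indefinite_description _ h)
                | right _ => m0 i end.
    have := h (cls x); rewrite scons_cls IH => hx.
    apply: U0; apply: US (UI hx hn') => i [].
    rewrite scons_p_at /x; case: excluded_middle_informative => // hh.
    case: (constructive_indefinite_description _ _) => y /= hy hy' _; exact: hy hy'.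
  move=> h m; rewrite -(cls_rep m) scons_cls IH.
  by apply: US h => i hi; rewrite scons_p_at.
- split.
    by case=> m; rewrite -(cls_rep m) scons_cls IH; apply: US => i hi;
      rewrite scons_p_at in hi; eexists; exact: hi.
  move=> h.
  pose x i := match excluded_middle_informative
                (exists y, sat (scons y (fun k => e k i)) q) with
              | left h => proj1_sig (constructive_indefinite_description _ h)
              | right _ => m0 i end.
  exists (cls x); rewrite scons_cls IH; apply: US h => i hi.
  rewrite scons_p_at /x; case: excluded_middle_informative => // hh.
  by case: (constructive_indefinite_description _ _).
Qed.

End Ultra.

Lemma In_mem (X : eqType) (x : X) (s : seq X) : List.In x s <-> x \in s.
Proof.
elim: s => [|y s IH] //=; rewrite inE; split.
  by case=> [->|/IH ->]; rewrite ?eqxx ?orbT.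
by case/orP => [/eqP ->|/IH]; [left|right].
Qed.

Definition pb (P : Prop) : bool :=
  if excluded_middle_informative P then true else false.
Lemma pbP P : pb P = true <-> P.
Proof. by rewrite /pb; case: excluded_middle_informative. Qed.

Section Compact.
Variables (L : language) (T : theory L) (B : structure L).
Variables (e' : nat -> B) (chi : atomic L).
Hypothesis hB : model_of_qa (TW T) B.
Hypothesis hchi : ~ sat_atomic e' chi.

Record piece := Piece {
  pD : seq (atomic L);
  pE : nat -> B;
  pS : forall a, List.In a pD -> sat_atomic pE a }.

Definition Good (P : piece) := exists (M : structure L) (c : B -> M),
  model_of T M /\ (forall a, List.In a (pD P) -> sat_atomic (c \o pE P) a) /\
  ~ sat_atomic (c \o e') chi.

Definition pext (P P0 : piece) := forall (M : structure L) (c : B -> M),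
  (forall a, List.In a (pD P) -> sat_atomic (c \o pE P) a) ->
  (forall a, List.In a (pD P0) -> sat_atomic (c \o pE P0) a).

Definition dbl (n : nat) := n.*2.
Definition dbl1 (n : nat) := n.*2.+1.
Definition mix (E1 E2 : nat -> B) (n : nat) := if odd n then E2 n./2 else E1 n./2.

Lemma mixK1 (X : Type) (g : B -> X) E1 E2 :
  (g \o mix E1 E2) \o dbl = g \o E1.
Proof.
apply: functional_extensionality => n; rewrite /= /mix /dbl odd_double doubleK //.
Qed.

Lemma mixK2 (X : Type) (g : B -> X) E1 E2 :
  (g \o mix E1 E2) \o dbl1 = g \o E2.
Proof.
apply: functional_extensionality => n; rewrite /= /mix /dbl1 /= odd_double /=.
by rewrite uphalf_double.
Qed.

Lemma mixK1' E1 E2 : mix E1 E2 \o dbl = E1.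
Proof. exact: (mixK1 id). Qed.
Lemma mixK2' E1 E2 : mix E1 E2 \o dbl1 = E2.
Proof. exact: (mixK2 id). Qed.

Lemma pmerge (P1 P2 : piece) : exists P, pext P P1 /\ pext P P2.
Proof.
have hS : forall a, List.In a (List.app (List.map (rena dbl) (pD P1))
                                       (List.map (rena dbl1) (pD P2))) ->
                    sat_atomic (mix (pE P1) (pE P2)) a.
  move=> a; rewrite List.in_app_iff !List.in_map_iff.
  case=> -[a0 [<- h]]; rewrite sat_rena.
    by rewrite mixK1'; apply: pS.
  by rewrite mixK2'; apply: pS.
exists (Piece hS); split => M c h a ha /=.
  have := h (rena dbl a); rewrite sat_rena mixK1; apply.
  by rewrite /= List.in_app_iff; left; apply: List.in_map.
have := h (rena dbl1 a); rewrite sat_rena mixK2; apply.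
by rewrite /= List.in_app_iff; right; apply: List.in_map.
Qed.

Lemma all_good (P : piece) : Good P.
Proof.
apply: NNPP => hng.
have H : forall (M : structure L) (c : B -> M), model_of T M ->
    (forall a, List.In a (pD P) -> sat_atomic (c \o pE P) a) -> sat_atomic (c \o e') chi.
  move=> M c hM hD; apply: NNPP => hc; apply: hng; exists M, c; split => //.
pose Ds := List.map (rena dbl) (pD P).
pose Es := mix (pE P) e'.
pose chis := rena dbl1 chi.
have [N hN] := list_bound_ex (chis :: Ds).
pose Keq := List.map (fun p : 'I_N * 'I_N => @aeq L (tvar p.1) (tvar p.2))
   (seq.filter (fun p : 'I_N * 'I_N => pb (Es p.1 = Es p.2)) (enum {: 'I_N * 'I_N})).
have inK : forall a, List.In a Keq -> exists i j, i < N /\ j < N /\ Es i = Es j /\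
                                     a = aeq (tvar i) (tvar j).
  move=> a; rewrite List.in_map_iff => -[p [<- /In_mem]].
  rewrite mem_filter => /andP [/pbP h _].
  by exists p.1, p.2; rewrite !ltn_ord.
have Kin : forall i j, i < N -> j < N -> Es i = Es j -> List.In (@aeq L (tvar i) (tvar j)) Keq.
  move=> i j hi hj he.
  apply: (List.in_map (fun p : 'I_N * 'I_N => @aeq L (tvar p.1) (tvar p.2))
            _ (Ordinal hi, Ordinal hj)).
  by apply/In_mem; rewrite mem_filter mem_enum andbT; apply/pbP.
pose Q := QA N (List.app Ds Keq) chis.
have TWQ : TW T Q.
  split.
    split => /=; last by apply: hN; left.
    move=> a; rewrite List.in_app_iff => -[ha|/inK [i [j [hi [hj [_ ->]]]]]] //=.
    by apply: hN; right.
  move=> M hM e0 e'' _ hh /=.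
  pose c (b : B) : M := match excluded_middle_informative (exists n, n < N /\ Es n = b) with
    | left h => e'' (proj1_sig (constructive_indefinite_description _ h))
    | right _ => e0 0 end.
  have cE : forall n, n < N -> c (Es n) = e'' n.
    move=> n hn; rewrite /c; case: excluded_middle_informative => [h|[]]; last by exists n.
    case: (constructive_indefinite_description _ _) => n' /= [hn' he].
    have := hh _ (proj2 (List.in_app_iff _ _ _) (or_intror (Kin _ _ hn' hn he))).
    by [].
  have pext' : forall a, atomic_bounded N a -> sat_atomic e'' a = sat_atomic (c \o Es) a.
    move=> a ha; apply: sat_atomic_ext ha _ => i hi /=; by rewrite cE.
  rewrite pext'; last by apply: hN; left.
  rewrite sat_rena /Es mixK2; apply: H hM _ => a ha.
  have hin : List.In (rena dbl a) (List.app Ds Keq).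
    by rewrite List.in_app_iff; left; apply: List.in_map.
  have := hh _ hin; rewrite pext'; last by apply: hN; right; apply: List.in_map.
  by rewrite sat_rena mixK1.
have := hB TWQ (e:=Es) (e':=Es) (fun _ _ => erefl).
rewrite /= sat_rena /Es mixK2' => h; apply: hchi; apply: h.
move=> a; rewrite List.in_app_iff => -[|/inK [i [j [_ [_ [he ->]]]]]] //=.
rewrite List.in_map_iff => -[a0 [<- ha0]]; rewrite sat_rena mixK1'; exact: pS.
Qed.

End Compact.

Lemma ultra_ex (I : Type) (F : (I -> Prop) -> Prop) :
  (exists i : I, True) ->
  (forall X, F X -> exists i, X i) ->
  (forall X Y, F X -> F Y -> exists Z, F Z /\ forall i, Z i -> X i /\ Y i) ->
  (forall X Y : I -> Prop, (forall i, X i -> Y i) -> F X -> F Y) ->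
  F (fun _ => True) ->
  exists U : (I -> Prop) -> Prop,
    U (fun _ => True) /\
        (forall X Y, U X -> U Y -> U (fun i => X i /\ Y i)) /\
        (forall X Y : I -> Prop, (forall i, X i -> Y i) -> U X -> U Y) /\
        ~ U (fun _ => False) /\
        (forall X, U X \/ U (fun i => ~ X i)) /\
        (forall X, F X -> U X).
Proof.
move=> [i0 _] Fex FI FS FT.
have PF : ProperFilter F.
  apply: Build_ProperFilter_ex => //; split => //.
    by move=> X Y hX hY; have [Z [hZ hZ']] := FI X Y hX hY; apply: FS hZ.
have [G [GU sFG]] := ultraFilterLemma PF.
exists G; split; [|split; [|split; [|split; [|split]]]].
- exact: (@filterT _ G _).
- by move=> X Y hX hY; apply: (@filterI _ G _).
- by move=> X Y h; apply: (@filterS _ G _).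
- exact: (@filter_not_empty _ G _).
- by move=> X; apply: in_ultra_setVsetC.
- exact: sFG.
Qed.

Theorem proposition4p3 (L : language) (T : theory L) (A : structure L) :
  is_theory T -> model_of T A ->
  (geometrically_closed_in (model_of T) A <->
   geometrically_closed_in (model_of_qa (TW T)) A).
Proof.
move=> _ _; split; last first.
  move=> H B f hB hf; apply: H => // q [_ hq] e; exact: hq B hB e.
move=> GC B f hB hf q e hA e' hagree hhyps.
apply: NNPP => hchi.
have good := all_good hB hchi.
pose Mi (P : piece B) : structure L :=
  proj1_sig (constructive_indefinite_description _ (good P)).
have hc : forall P, exists c : B -> Mi P, model_of T (Mi P) /\
    (forall a, List.In a (pD P) -> sat_atomic (c \o pE P) a) /\
    ~ sat_atomic (c \o e') (qa_concl q).
  move=> P; rewrite /Mi; case: (constructive_indefinite_description _ _) => M /= h //.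
pose c (P : piece B) : B -> Mi P := proj1_sig (constructive_indefinite_description _ (hc P)).
have hcP : forall P, model_of T (Mi P) /\
    (forall a, List.In a (pD P) -> sat_atomic (c P \o pE P) a) /\
    ~ sat_atomic (c P \o e') (qa_concl q).
  move=> P; rewrite /c; case: (constructive_indefinite_description _ _) => //.
pose F (X : piece B -> Prop) := exists P0, forall P, pext P P0 -> X P.
have P00 : forall a, List.In a [::] -> sat_atomic e' a by [].
have [U [UT [UI [US [U0 [Uu FU]]]]]] : exists U : (piece B -> Prop) -> Prop,
    U (fun _ => True) /\
    (forall X Y, U X -> U Y -> U (fun i => X i /\ Y i)) /\
    (forall X Y : piece B -> Prop, (forall i, X i -> Y i) -> U X -> U Y) /\
    ~ U (fun _ => False) /\
    (forall X, U X \/ U (fun i => ~ X i)) /\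
    (forall X, F X -> U X).
  apply: ultra_ex.
  - by exists (Piece P00).
  - by move=> X [P0 h]; exists P0; apply: h => M c0 h0.
  - move=> X Y [P1 h1] [P2 h2]; have [P [e1 e2]] := pmerge P1 P2.
    exists (fun P' => pext P' P); split; first by exists P.
    move=> P' hP'; split; [apply: h1|apply: h2] => M c0 h0; [apply: e1|apply: e2];
      exact: hP'.
  - by move=> X Y h [P0 h0]; exists P0 => P /h0; apply: h.
  - by exists (Piece P00).
pose m0 (P : piece B) : Mi P := c P (e' 0).
pose C := Ult Mi U.
pose g (b : B) : C := cls U (fun P => c P b).
have los' := los UT UI US U0 Uu m0.
have hg : homomorphism g.
  move=> a eB hsat.
  have := proj2 (los' (fatom a) (fun k P => c P (eB k))); apply.
  have hPa : forall b, List.In b [:: a] -> sat_atomic eB b by move=> b [<-|].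
  apply: FU; exists (Piece hPa) => P hP; apply: (hP _ (c P)); last by left.
  exact: (proj1 (proj2 (hcP P))).
have hgf : homomorphism (g \o f).
  by move=> a e0 h; apply: hg; apply: hf.
have hC : model_of T C.
  move=> p hp eC.
  have -> : eC = (fun k => cls U (rep (eC k))).
    by apply: functional_extensionality => k; rewrite cls_rep.
  apply/los'; apply: US UT => P _; exact: (proj1 (hcP P)).
have := GC C (g \o f) hC hgf q e hA (g \o e').
have : sat_atomic (g \o e') (qa_concl q) -> False.
  move=> h.
  have := proj1 (los' (fatom (qa_concl q)) (fun k P => c P (e' k))) h => h2.
  have h3 : U (fun P => ~ sat_atomic (fun k => c P (e' k)) (qa_concl q)).
    by apply: US UT => P _; exact: (proj2 (proj2 (hcP P))).
  apply: U0; apply: (US _ _ _ (UI _ _ h2 h3)) => P [] h4 h5; exact: h5 h4.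
move=> hn h; apply: hn; apply: h.
  by move=> i hi /=; rewrite hagree.
by move=> a ha; apply: hg; apply: hhyps.
Qed.
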